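(* An element $\boldsymbol\pi\in H_{1,2,2}$ is a prime of $H_{1,2,2}$ if and only if $N(\boldsymbol\pi)$ is a rational prime.
   Context: Let $\mathbf{i},\mathbf{j},\mathbf{k}$ be the standard quaternion units; $\overline{\mathbf{q}}$ is quaternion conjugation and $N(\mathbf{q})=\mathbf{q}\overline{\mathbf{q}}$. $H_{1,2,2}$ is the subring of the quaternions equal to the $\mathbb{Z}$-module generated by $\mathbf{v}_1=1$, $\mathbf{v}_2=\mathbf{i}$, $\mathbf{v}_3=\tfrac12(1+\mathbf{i}+\sqrt2\,\mathbf{j})$, $\mathbf{v}_4=\tfrac12(1+\mathbf{i}+\sqrt2\,\mathbf{k})$. A unit is an element invertible in $H_{1,2,2}$ (equivalently of norm 1). A prime of $H_{1,2,2}$ is a nonzero nonunit $\boldsymbol\pi$ such that whenever $\boldsymbol\pi=\mathbf{a}\mathbf{b}$ with $\mathbf{a},\mathbf{b}\in H_{1,2,2}$, at least one of $\mathbf{a},\mathbf{b}$ is a unit. *)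

(* Defs.v *)
From Stdlib Require Import Reals ZArith Znumtheory.
Open Scope R_scope.

Record quat := Quat { q0 : R; q1 : R; q2 : R; q3 : R }.

Definition qadd (p q : quat) : quat :=
  Quat (q0 p + q0 q) (q1 p + q1 q) (q2 p + q2 q) (q3 p + q3 q).

Definition qscale (r : R) (q : quat) : quat :=
  Quat (r * q0 q) (r * q1 q) (r * q2 q) (r * q3 q).

(* Hamilton product: i^2 = j^2 = k^2 = ijk = -1. *)
Definition qmul (p q : quat) : quat :=
  Quat (q0 p * q0 q - q1 p * q1 q - q2 p * q2 q - q3 p * q3 q)
       (q0 p * q1 q + q1 p * q0 q + q2 p * q3 q - q3 p * q2 q)
       (q0 p * q2 q - q1 p * q3 q + q2 p * q0 q + q3 p * q1 q)
       (q0 p * q3 q + q1 p * q2 q - q2 p * q1 q + q3 p * q0 q).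

Definition qconj (q : quat) : quat := Quat (q0 q) (- q1 q) (- q2 q) (- q3 q).

Definition qzero : quat := Quat 0 0 0 0.
Definition qone : quat := Quat 1 0 0 0.
Definition qi : quat := Quat 0 1 0 0.
Definition qj : quat := Quat 0 0 1 0.
Definition qk : quat := Quat 0 0 0 1.

Definition qreal (r : R) : quat := Quat r 0 0 0.

Definition qnorm (q : quat) : quat := qmul q (qconj q).

Definition v1 : quat := qone.
Definition v2 : quat := qi.
Definition v3 : quat := qscale (1/2) (qadd (qadd qone qi) (qscale (sqrt 2) qj)).
Definition v4 : quat := qscale (1/2) (qadd (qadd qone qi) (qscale (sqrt 2) qk)).

Definition inH (q : quat) : Prop :=
  exists a b c d : Z,
    q = qadd (qadd (qscale (IZR a) v1) (qscale (IZR b) v2))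
             (qadd (qscale (IZR c) v3) (qscale (IZR d) v4)).

Definition isUnitH (u : quat) : Prop :=
  inH u /\ exists v, inH v /\ qmul u v = qone /\ qmul v u = qone.

Definition isPrimeH (p : quat) : Prop :=
  inH p /\ p <> qzero /\ ~ isUnitH p /\
  forall a b : quat, inH a -> inH b -> p = qmul a b -> isUnitH a \/ isUnitH b.

Definition norm_is_rational_prime (q : quat) : Prop :=
  exists p : Z, prime p /\ qnorm q = qreal (IZR p).

(* Main.v *)
Require Import Defs.
From Stdlib Require Import Reals ZArith Znumtheory.
From Stdlib Require Import Lia Lra Psatz List Classical Wf_nat Zwf.


Record Z4 := mk4 { za : Z; zb : Z; zc : Z; zd : Z }.
Open Scope Z_scope.
Definition zmul (x y : Z4) : Z4 :=
  let (a,b,c,d) := x in let (e,f,g,h) := y in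
  mk4 (a*e - b*f - b*g - c*g - d*f - d*g - d*h)
      (a*f + b*e + b*h + c*f + c*h - d*g)
      (a*g - b*h + c*e + c*g + d*f + d*g)
      (a*h + b*g - c*f + d*e + d*g + d*h).
Definition zN (x : Z4) : Z :=
  let (a,b,c,d) := x in a*a+b*b+c*c+d*d+a*c+a*d+b*c+b*d+c*d.
Definition zconj (x : Z4) : Z4 := let (a,b,c,d) := x in mk4 (a+c+d) (-b) (-c) (-d).
Definition zadd (x y : Z4) : Z4 :=
  let (a,b,c,d) := x in let (e,f,g,h) := y in mk4 (a+e) (b+f) (c+g) (d+h).
Definition zsub (x y : Z4) : Z4 :=
  let (a,b,c,d) := x in let (e,f,g,h) := y in mk4 (a-e) (b-f) (c-g) (d-h).
Definition zs (n : Z) : Z4 := mk4 n 0 0 0.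

Ltac zd := repeat match goal with x : Z4 |- _ => destruct x end.
Ltac zsimp := cbv beta iota delta [zmul zN zconj zadd zsub zs za zb zc zd].
Ltac zring := zd; zsimp; f_equal; ring.

Lemma zN_mul x y : zN (zmul x y) = zN x * zN y.
Proof. zd; zsimp; ring. Qed.
Lemma zN_conj x : zN (zconj x) = zN x.
Proof. zd; zsimp; ring. Qed.
Lemma zmul_conj_r x : zmul x (zconj x) = zs (zN x).
Proof. zring. Qed.
Lemma zmul_conj_l x : zmul (zconj x) x = zs (zN x).
Proof. zring. Qed.
Lemma zmul_assoc x y z : zmul (zmul x y) z = zmul x (zmul y z).
Proof. zring. Qed.
Lemma zmul_1r x : zmul x (zs 1) = x.
Proof. zring. Qed.
Lemma zmul_1l x : zmul (zs 1) x = x.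
Proof. zring. Qed.
Lemma zs_comm p x : zmul (zs p) x = zmul x (zs p).
Proof. zring. Qed.
Lemma zs_mul p x : zmul (zs p) x = mk4 (p * za x) (p * zb x) (p * zc x) (p * zd x).
Proof. zring. Qed.
Lemma zconj_mul x y : zconj (zmul x y) = zmul (zconj y) (zconj x).
Proof. zring. Qed.
Lemma zconj_conj x : zconj (zconj x) = x.
Proof. zring. Qed.
Lemma zconj_zs p x : zconj (zmul (zs p) x) = zmul (zs p) (zconj x).
Proof. zring. Qed.
Lemma zN_zs p : zN (zs p) = p * p.
Proof. zsimp; ring. Qed.

Lemma zN4 x : 4 * zN x = (2*za x + zc x + zd x)*(2*za x + zc x + zd x) + (2*zb x + zc x + zd x)*(2*zb x + zc x + zd x)
   + 2 * (zc x * zc x) + 2 * (zd x * zd x).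
Proof. zd; zsimp; ring. Qed.
Lemma zN_nonneg x : 0 <= zN x.
Proof. pose proof (zN4 x).
  pose proof (Z.square_nonneg (2*za x+zc x+zd x)). pose proof (Z.square_nonneg (2*zb x+zc x+zd x)).
  pose proof (Z.square_nonneg (zc x)). pose proof (Z.square_nonneg (zd x)). lia. Qed.
Lemma zN_zero x : zN x = 0 -> x = zs 0.
Proof.
  intro H. pose proof (zN4 x) as E. rewrite H in E. destruct x as [a b c d]; cbn in *.
  pose proof (Z.square_nonneg (2*a+c+d)). pose proof (Z.square_nonneg (2*b+c+d)).
  pose proof (Z.square_nonneg c). pose proof (Z.square_nonneg d).
  assert (c * c = 0) by lia. assert (d * d = 0) by lia.
  assert (c = 0) by nia. assert (d = 0) by nia. subst.
  assert (a * a = 0) by lia. assert (b * b = 0) by lia.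
  assert (a = 0) by nia. assert (b = 0) by nia. subst. reflexivity.
Qed.
Lemma zN_pos x : x <> zs 0 -> 0 < zN x.
Proof. intro H. pose proof (zN_nonneg x). destruct (Z.eq_dec (zN x) 0); [|lia].
  exfalso; apply H, zN_zero; auto. Qed.

Lemma zsub_eq0 x y : zsub x y = zs 0 -> x = y.
Proof. zd; cbn; intro H; injection H; intros; f_equal; lia. Qed.

Lemma round X M : 0 < M -> exists k, -M <= X - 2*M*k < M.
Proof.
  intro HM. exists ((X + M) / (2*M)).
  pose proof (Z.div_mod (X+M) (2*M)) as E.
  pose proof (Z.mod_pos_bound (X+M) (2*M)). lia.
Qed.

Lemma div_ident d z q : zmul (zconj d) (zsub z (zmul d q))
   = zsub (zmul (zconj d) z) (zmul (zs (zN d)) q).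
Proof. zring. Qed.

Lemma zdiv z d : d <> zs 0 -> exists q, zN (zsub z (zmul d q)) < zN d.
Proof.
  intro Hd. pose proof (zN_pos d Hd) as HM. set (M := zN d) in *.
  destruct (zmul (zconj d) z) as [wa wb wc wd] eqn:Ew.
  destruct (round (2*wc) M HM) as [c Hc].
  destruct (round (2*wd) M HM) as [dd Hdd].
  destruct (round (2*wa + (wc - M*c) + (wd - M*dd)) M HM) as [a Ha].
  destruct (round (2*wb + (wc - M*c) + (wd - M*dd)) M HM) as [b Hb].
  exists (mk4 a b c dd).
  pose proof (div_ident d z (mk4 a b c dd)) as E. rewrite Ew, zs_mul in E.
  cbn [za zb zc zd zsub] in E. fold M in E.
  assert (EN := f_equal zN E). rewrite zN_mul, zN_conj in EN. fold M in EN.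
  pose proof (zN4 (mk4 (wa - M * a) (wb - M * b) (wc - M * c) (wd - M * dd))) as E4.
  cbn [za zb zc zd] in E4. rewrite <- EN in E4.
  set (r := zN (zsub z (zmul d (mk4 a b c dd)))) in *.
  set (u1 := 2 * (wa - M * a) + (wc - M * c) + (wd - M * dd)) in *.
  set (u2 := 2 * (wb - M * b) + (wc - M * c) + (wd - M * dd)) in *.
  assert (H1 : u1 * u1 <= M * M) by (unfold u1; nia).
  assert (H2 : u2 * u2 <= M * M) by (unfold u2; nia).
  assert (H3 : 4 * ((wc - M*c) * (wc - M*c)) <= M * M) by nia.
  assert (H4 : 4 * ((wd - M*dd)*(wd - M*dd)) <= M * M) by nia.
  assert (M * r < M * M) by nia.
  nia.
Qed.


Open Scope Z_scope.
Lemma nat_min (P : nat -> Prop) : (exists n, P n) -> exists n, P n /\ forall m, P m -> (n <= m)%nat.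
Proof.
  intros [n Hn]. revert Hn. induction n as [n IH] using lt_wf_ind. intro Hn.
  destruct (classic (exists m, P m /\ (m < n)%nat)) as [[m [Hm Hlt]]|Hno].
  - exact (IH m Hlt Hm).
  - exists n; split; auto. intros m Hm. destruct (le_lt_dec n m); auto.
    exfalso; apply Hno; eauto.
Qed.

Definition inI (b : Z4) (p : Z) (z : Z4) : Prop :=
  exists u v, z = zadd (zmul b u) (zmul (zs p) v).

Lemma inI_sub b p z d q : inI b p z -> inI b p d -> inI b p (zsub z (zmul d q)).
Proof.
  intros [u1 [v1 ->]] [u2 [v2 ->]].
  exists (zsub u1 (zmul u2 q)), (zsub v1 (zmul v2 q)). zring.
Qed.

Lemma rgcd b p : 0 < p -> exists d, d <> zs 0 /\ inI b p d /\
   (exists q1, b = zmul d q1) /\ (exists q2, zs p = zmul d q2).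
Proof.
  intro Hp.
  destruct (nat_min (fun n => exists z, inI b p z /\ z <> zs 0 /\ n = Z.to_nat (zN z)))
    as [n [[d [Hd [Hd0 ->]]] Hmin]].
  { exists (Z.to_nat (zN (zs p))), (zs p). split; [|split; auto].
    - exists (zs 0), (zs 1). zring.
    - intro E. injection E. lia. }
  assert (Hdiv : forall z, inI b p z -> exists q, z = zmul d q).
  { intros z Hz. destruct (zdiv z d Hd0) as [q Hq]. exists q.
    apply zsub_eq0. destruct (classic (zsub z (zmul d q) = zs 0)) as [E|E]; auto.
    exfalso. assert (Hr := Hmin _ (ex_intro _ _ (conj (inI_sub b p z d q Hz Hd) (conj E eq_refl)))).
    pose proof (zN_nonneg (zsub z (zmul d q))). pose proof (zN_nonneg d). lia. }
  exists d; repeat split; auto; apply Hdiv.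
  - exists (zs 1), (zs 0). zring.
  - exists (zs 0), (zs 1). zring.
Qed.


Open Scope Z_scope.

Lemma aux_id1 X b u v Y p : zmul X (zmul (zadd (zmul b u) (zmul (zs p) v)) Y) =
  zadd (zmul (zmul X b) (zmul u Y)) (zmul (zs p) (zmul X (zmul v Y))).
Proof. Time zring. Qed.
Lemma aux_id2 p k w z : zadd (zmul (zs (p*k)) w) (zmul (zs p) z) = zmul (zs p) (zadd (zmul (zs k) w) z).
Proof. Time zring. Qed.

Lemma unit_case b p d k : inI b p d -> zN d = 1 -> zN b = p * k ->
  exists w, zconj b = zmul (zs p) w.
Proof.
  intros [u [v Hd]] Hn Hb.
  assert (E1 : zmul d (zconj d) = zs 1) by (rewrite zmul_conj_r, Hn; reflexivity).
  exists (zadd (zmul (zs k) (zmul u (zconj d))) (zmul (zconj b) (zmul v (zconj d)))).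
  transitivity (zmul (zconj b) (zmul d (zconj d))).
  { rewrite E1, zmul_1r. reflexivity. }
  generalize (zconj d) as Y. intro Y. rewrite Hd, aux_id1, zmul_conj_l, Hb, aux_id2. reflexivity.
Qed.

Lemma unit_q2 d q2 p : zs p = zmul d q2 -> zN q2 = 1 -> d = zmul (zs p) (zconj q2).
Proof.
  intros E Hn. rewrite E, zmul_assoc, zmul_conj_r, Hn, zmul_1r. reflexivity.
Qed.

Open Scope Z_scope.

Lemma sq_inj p m x y : prime p -> p = 2*m+1 -> 0 <= x <= m -> 0 <= y <= m ->
  (p | x*x - y*y) -> x = y.
Proof.
  intros Hp Hm Hx Hy Hd.
  replace (x*x - y*y) with ((x-y)*(x+y)) in Hd by ring.
  destruct (prime_mult p Hp _ _ Hd) as [[k Hk]|[k Hk]].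
  - destruct (Z_lt_le_dec k 0); [nia|]. destruct (Z_lt_le_dec 0 k); [nia|]. nia.
  - destruct (Z_lt_le_dec k 0); [nia|]. destruct (Z_lt_le_dec 0 k); [nia|].
    assert (k = 0) by lia. subst. lia.
Qed.

Lemma in_dom m z : In z (map Z.of_nat (seq 0 (S (Z.to_nat m)))) -> 0 <= m -> 0 <= z <= m.
Proof.
  intros H Hm. apply in_map_iff in H. destruct H as [n [<- Hn]]. apply in_seq in Hn. lia.
Qed.

Lemma nodup_map_dom m (f : Z -> Z) :
  (forall x y, 0 <= x <= m -> 0 <= y <= m -> f x = f y -> x = y) -> 0 <= m ->
  NoDup (map f (map Z.of_nat (seq 0 (S (Z.to_nat m))))).
Proof.
  intros Hf Hm. apply NoDup_map_NoDup_ForallPairs.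
  - intros a b Ha Hb. apply Hf; eapply in_dom; eauto.
  - apply NoDup_map_NoDup_ForallPairs; [|apply seq_NoDup].
    intros a b _ _. lia.
Qed.

Lemma lagrange p : prime p -> exists x y, (p | x*x + y*y + 1).
Proof.
  intro Hp. pose proof (prime_ge_2 p Hp) as H2.
  destruct (Z.eq_dec p 2) as [->|Hne].
  { exists 1, 0. exists 1. reflexivity. }
  assert (Hodd : p mod 2 = 1).
  { pose proof (Z.mod_pos_bound p 2). destruct (Z.eq_dec (p mod 2) 0) as [E|E]; [|lia].
    exfalso. apply Z.mod_divide in E; [|lia].
    destruct (prime_divisors p Hp 2 E) as [?|[?|[?|?]]]; lia. }
  set (m := p / 2). assert (Hm : p = 2*m+1) by (pose proof (Z.div_mod p 2); lia).
  assert (Hm0 : 0 <= m) by lia.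
  set (dom := map Z.of_nat (seq 0 (S (Z.to_nat m)))).
  set (L1 := map (fun x => (x*x) mod p) dom).
  set (L2 := map (fun y => (-1 - y*y) mod p) dom).
  destruct (classic (exists z, In z L1 /\ In z L2)) as [[z [H1 H3]]|Hno].
  - apply in_map_iff in H1. destruct H1 as [x [Ex _]].
    apply in_map_iff in H3. destruct H3 as [y [Ey _]].
    exists x, y. apply Z.mod_divide; [lia|].
    replace (x*x + y*y + 1) with (x*x - (-1 - y*y)) by ring.
    rewrite Zminus_mod, Ex, Ey, Z.sub_diag. reflexivity.
  - exfalso.
    assert (ND : NoDup (L1 ++ L2)).
    { apply NoDup_app.
      - apply nodup_map_dom; auto. intros x y Hx Hy E. apply (sq_inj p m); auto.
        apply Z.mod_divide; [lia|]. rewrite Zminus_mod, E, Z.sub_diag. reflexivity.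
      - apply nodup_map_dom; auto. intros x y Hx Hy E. symmetry. apply (sq_inj p m); auto.
        apply Z.mod_divide; [lia|].
        replace (y*y - x*x) with ((-1 - x*x) - (-1 - y*y)) by ring.
        rewrite Zminus_mod, E, Z.sub_diag. reflexivity.
      - intros a Ha Hb. apply Hno. eauto. }
    assert (INC : incl (L1 ++ L2) (map Z.of_nat (seq 0 (Z.to_nat p)))).
    { intros z Hz. assert (Hb : 0 <= z < p).
      { apply in_app_or in Hz. destruct Hz as [Hz|Hz]; apply in_map_iff in Hz;
        destruct Hz as [x [<- _]]; apply Z.mod_pos_bound; lia. }
      apply in_map_iff. exists (Z.to_nat z). split; [lia|]. apply in_seq. lia. }
    pose proof (NoDup_incl_length ND INC) as HL.
    unfold L1, L2, dom in HL. rewrite length_app, !length_map, !length_seq in HL. lia.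
Qed.

Lemma one_not_mult p t : 2 <= p -> 1 = p * t \/ -1 = p * t -> False.
Proof. intros H [E|E]; destruct (Z.lt_trichotomy t 0) as [Ht|[Ht|Ht]]; try (subst; lia); nia. Qed.

Lemma norm_p p : prime p -> exists a, zN a = p.
Proof.
  intro Hp. pose proof (prime_ge_2 p Hp) as H2.
  destruct (lagrange p Hp) as [x [y [k Hk]]].
  set (b := mk4 (x-1) (y-1) 1 1).
  assert (Hb : zN b = p * k) by (unfold b; zsimp; rewrite (Z.mul_comm p k), <- Hk; ring).
  destruct (rgcd b p ltac:(lia)) as [d [Hd0 [HdI [[q1 Hq1] [q2 Hq2]]]]].
  assert (HN := f_equal zN Hq2). rewrite zN_mul, zN_zs in HN.
  pose proof (zN_pos d Hd0). pose proof (zN_nonneg q2).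
  assert (Hpd : (p | zN d * zN q2)) by (rewrite <- HN; exists p; ring).
  destruct (prime_mult p Hp _ _ Hpd) as [[j Hj]|[j Hj]].
  -
    assert (Hj2 : j * zN q2 = p) by nia.
    assert (Hjd : (j | p)) by (exists (zN q2); lia).
    destruct (prime_divisors p Hp j Hjd) as [?|[?|[?|?]]]; try nia.
    + exists d; lia.
    + exfalso. assert (Hq21 : zN q2 = 1) by nia.
      pose proof (unit_q2 d q2 p Hq2 Hq21) as Ed. rewrite Ed, zmul_assoc in Hq1.
      assert (Hc := f_equal zc Hq1). rewrite zs_mul in Hc. unfold b in Hc. cbn in Hc.
      eapply one_not_mult; eauto.
  - assert (Hj2 : zN d * j = p) by nia.
    assert (Hjd : (zN d | p)) by (exists j; lia).
    destruct (prime_divisors p Hp _ Hjd) as [?|[?|[?|?]]]; try nia.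
    + exfalso. assert (Hd1 : zN d = 1) by lia. destruct (unit_case b p d k HdI Hd1 Hb) as [w Hw].
      assert (Hc := f_equal zc Hw). rewrite zs_mul in Hc. unfold b in Hc. cbn in Hc. eapply one_not_mult; eauto.
    + exists d; lia.
Qed.

Open Scope Z_scope.

Definition zprime (x : Z4) : Prop :=
  x <> zs 0 /\ zN x <> 1 /\ forall a b, x = zmul a b -> zN a = 1 \/ zN b = 1.

Lemma prime_div_exists n : 1 < n -> exists p, prime p /\ (p | n).
Proof.
  induction n as [n IH] using (well_founded_induction (Zwf_well_founded 0)).
  intro Hn. destruct (prime_dec n) as [Hp|Hp].
  - exists n; split; auto. exists 1; ring.
  - destruct (not_prime_divide n Hn Hp) as [d [Hd Hdn]].
    destruct (IH d ltac:(unfold Zwf; lia) ltac:(lia)) as [p [Hp' Hpd]].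
    exists p; split; auto. eapply Z.divide_trans; eauto.
Qed.

Lemma pfactor x p z : zprime x -> prime p -> x = zmul (zs p) z -> False.
Proof.
  intros [_ [_ Hx]] Hp E. pose proof (prime_ge_2 p Hp).
  destruct (norm_p p Hp) as [a Ha].
  assert (E2 : x = zmul a (zmul (zconj a) z)).
  { rewrite E, <- zmul_assoc, zmul_conj_r, Ha. reflexivity. }
  destruct (Hx _ _ E2) as [Hu|Hu]; [lia|].
  rewrite zN_mul, zN_conj, Ha in Hu. pose proof (zN_nonneg z).
  apply (one_not_mult p (zN z)); auto.
Qed.

Lemma zmain x : zprime x <-> prime (zN x).
Proof.
  split.
  - intros Hx. pose proof Hx as [Hx0 [Hx1 Hxp]].
    pose proof (zN_pos x Hx0).
    destruct (prime_div_exists (zN x) ltac:(lia)) as [p [Hp [m Hm]]].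
    pose proof (prime_ge_2 p Hp).
    destruct (rgcd x p ltac:(lia)) as [d [Hd0 [HdI [[q1 Hq1] [q2 Hq2]]]]].
    destruct (Hxp _ _ Hq1) as [Hd1|Hq11].
    + exfalso. destruct (unit_case x p d m HdI Hd1 ltac:(lia)) as [w Hw].
      apply (pfactor x p (zconj w)); auto.
      rewrite <- (zconj_conj x), Hw, zconj_zs. reflexivity.
    + assert (HN := f_equal zN Hq2). rewrite zN_mul, zN_zs in HN.
      assert (HNx := f_equal zN Hq1). rewrite zN_mul, Hq11, Z.mul_1_r in HNx.
      pose proof (zN_nonneg q2).
      rewrite <- HNx, Hm in HN.
      assert (Hk : m * zN q2 = p) by nia.
      assert (Hmd : (m | p)) by (exists (zN q2); lia).
      destruct (prime_divisors p Hp m Hmd) as [Ej|[Ej|[Ej|Ej]]]; try nia.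
      * rewrite Hm, Ej, Z.mul_1_l. auto.
      * exfalso. assert (Hq21 : zN q2 = 1) by nia.
        pose proof (unit_q2 d q2 p Hq2 Hq21) as Ed. rewrite Ed, zmul_assoc in Hq1.
        exact (pfactor x p _ Hx Hp Hq1).
  - intro Hp. pose proof (prime_ge_2 _ Hp). repeat split.
    + intro E. rewrite E in Hp. apply not_prime_0. exact Hp.
    + lia.
    + intros a b E. subst x. rewrite zN_mul in *.
      pose proof (zN_nonneg a). pose proof (zN_nonneg b).
      assert (Hd : (zN a | zN a * zN b)) by (exists (zN b); ring).
      destruct (prime_divisors _ Hp _ Hd) as [Ej|[Ej|[Ej|Ej]]]; try nia.
Qed.

Open Scope R_scope.

Definition emb (x : Z4) : quat :=
  let (a,b,c,d) := x in
  qadd (qadd (qscale (IZR a) v1) (qscale (IZR b) v2))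
       (qadd (qscale (IZR c) v3) (qscale (IZR d) v4)).

Lemma s2 : sqrt 2 * sqrt 2 = 2.
Proof. apply sqrt_sqrt; lra. Qed.

Ltac izr := repeat rewrite ?plus_IZR, ?minus_IZR, ?mult_IZR, ?opp_IZR.

Lemma emb_mul x y : qmul (emb x) (emb y) = emb (zmul x y).
Proof.
  destruct x as [a b c d], y as [e f g h].
  unfold emb, zmul, qmul, qadd, qscale, v1, v2, v3, v4, qone, qi, qj, qk; simpl.
  izr. pose proof s2 as H.
  f_equal; ring_simplify [H]; field.
Qed.

Lemma emb_comp a b c d : emb (mk4 a b c d) =
  Quat (IZR a + (IZR c + IZR d)/2) (IZR b + (IZR c + IZR d)/2)
       (IZR c * sqrt 2 / 2) (IZR d * sqrt 2 / 2).
Proof.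
  unfold emb, qadd, qscale, v1, v2, v3, v4, qone, qi, qj, qk; simpl. f_equal; field.
Qed.

Lemma emb_inj x y : emb x = emb y -> x = y.
Proof.
  destruct x as [a b c d], y as [e f g h]. rewrite !emb_comp. intro E.
  injection E. intros E3 E2 E1 E0.
  assert (Hs : 0 < sqrt 2) by (apply sqrt_lt_R0; lra).
  assert (IZR c = IZR g) by nra. assert (IZR d = IZR h) by nra.
  assert (IZR a = IZR e) by lra. assert (IZR b = IZR f) by lra.
  apply eq_IZR in H, H0, H1, H2. subst. reflexivity.
Qed.

Lemma emb_z0 : emb (zs 0) = qzero.
Proof. unfold zs; rewrite emb_comp; unfold qzero; f_equal; lra. Qed.
Lemma emb_z1 : emb (zs 1) = qone.
Proof. unfold zs; rewrite emb_comp; unfold qone; f_equal; lra. Qed.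

Lemma emb_norm x : qnorm (emb x) = qreal (IZR (zN x)).
Proof.
  destruct x as [a b c d].
  unfold emb, qnorm, qmul, qconj, qreal, zN, qadd, qscale, v1, v2, v3, v4, qone, qi, qj, qk; simpl.
  izr. pose proof s2 as H. f_equal; ring_simplify [H]; field.
Qed.

Lemma inH_emb q : inH q <-> exists x, q = emb x.
Proof.
  split.
  - intros [a [b [c [d E]]]]. exists (mk4 a b c d). exact E.
  - intros [[a b c d] E]. exists a, b, c, d. exact E.
Qed.

Lemma unit_emb x : isUnitH (emb x) <-> zN x = 1%Z.
Proof.
  split.
  - intros [_ [v [Hv [E _]]]]. apply inH_emb in Hv. destruct Hv as [y ->].
    rewrite emb_mul, <- emb_z1 in E. apply emb_inj in E.
    apply (f_equal zN) in E. rewrite zN_mul, zN_zs in E.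
    rewrite Z.mul_1_l in E. apply (Z.eq_mul_1_nonneg _ _ (zN_nonneg x) E).
  - intro H. split; [apply inH_emb; eauto|].
    exists (emb (zconj x)). split; [apply inH_emb; eauto|].
    rewrite !emb_mul, zmul_conj_r, zmul_conj_l, H, emb_z1. split; reflexivity.
Qed.

Lemma prime_emb x : isPrimeH (emb x) <-> zprime x.
Proof.
  split.
  - intros [_ [H0 [H1 H2]]]. repeat split.
    + intro E. apply H0. rewrite E. apply emb_z0.
    + intro E. apply H1. apply unit_emb. exact E.
    + intros a b E. destruct (H2 (emb a) (emb b)) as [Hu|Hu].
      * apply inH_emb; eauto.
      * apply inH_emb; eauto.
      * rewrite emb_mul, E. reflexivity.
      * left. apply unit_emb. exact Hu.
      * right. apply unit_emb. exact Hu.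
  - intros [H0 [H1 H2]]. repeat split.
    + apply inH_emb; eauto.
    + intro E. apply H0. apply emb_inj. rewrite E, emb_z0. reflexivity.
    + intro E. apply H1. apply unit_emb. exact E.
    + intros a b Ha Hb E. apply inH_emb in Ha, Hb. destruct Ha as [a' ->], Hb as [b' ->].
      rewrite emb_mul in E. apply emb_inj in E.
      destruct (H2 a' b' E) as [Hu|Hu]; [left|right]; apply unit_emb; exact Hu.
Qed.

Lemma nprime_emb x : norm_is_rational_prime (emb x) <-> prime (zN x).
Proof.
  unfold norm_is_rational_prime. rewrite emb_norm. split.
  - intros [p [Hp E]]. unfold qreal in E. injection E. intro E'. apply eq_IZR in E'.
    rewrite E'. exact Hp.
  - intro Hp. exists (zN x). split; auto.
Qed.

Theorem theorem37 : forall pi : quat, inH pi ->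
  (isPrimeH pi <-> norm_is_rational_prime pi).
Proof.
  intros pi Hpi. apply inH_emb in Hpi. destruct Hpi as [x ->].
  rewrite prime_emb, nprime_emb. apply zmain.
Qed.
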